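(* Let $\eta>0$ and let $\mathbf x^*=(\mathbf u^*,\mathbf v^*,\mathbf t^* )$ be an optimal solution of $$\min_{(\mathbf u,\mathbf v,\mathbf t)\in\mathcal X}\ h_\eta(\mathbf u,\mathbf v,\mathbf t):=\frac{1}{4\eta}\sum_{i,j=1}^n t_{ij}^2+\tau\langle e^{-\mathbf u/\tau},\mathbf a\rangle+\tau\langle e^{-\mathbf v/\tau},\mathbf b\rangle,$$ where $\mathcal X=\{(\mathbf u,\mathbf v,\mathbf t):\mathbf u,\mathbf v\in\mathbb{R}^n,\mathbf t\in\mathbb{R}^{n\times n},t_{ij}\ge0,\ t_{ij}\ge u_i+v_j-C_{ij}\ \forall i,j\}$. Then $\mathbf x^*\in V_D$, where $D=\|C\|_\infty+\eta(\alpha+\beta)+\tau\log\big(\frac{\alpha+\beta}{2}\big)-\tau\min\{\log a_{min},\log b_{min}\}$ and $V_D=\{(\mathbf u,\mathbf v,\mathbf t):\ \tau\log\big(\frac{2a_i}{\alpha+\beta}\big)\le u_i\le D,\ \tau\log\big(\frac{2b_j}{\alpha+\beta}\big)\le v_j\le D\ \forall i,j\in[n]\}$.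
   Context: Let $n\ge1$, $C\in\mathbb{R}^{n\times n}$ with nonnegative entries and $\|C\|_\infty=\max_{i,j}|C_{ij}|$; $\mathbf a,\mathbf b\in\mathbb{R}^n$ with strictly positive entries, $\alpha=\sum_i a_i$, $\beta=\sum_i b_i$, $a_{min}=\min_i a_i$, $b_{min}=\min_i b_i$; $\tau>0$. $e^{-\mathbf u/\tau}$ denotes the entrywise exponential. *)

(* Defs.v *)
From HB Require Import structures.
From mathcomp Require Import all_boot all_order all_algebra.
From mathcomp Require Import all_classical all_reals all_analysis.
Set Implicit Arguments. Unset Strict Implicit. Unset Printing Implicit Defensive.
Import Order.TTheory GRing.Theory Num.Theory.
Local Open Scope ring_scope.

Definition mx_infnorm (R : realType) (n : nat) (C : 'M[R]_n) : R :=
  \big[Num.max/0]_(i < n) \big[Num.max/0]_(j < n) `|C i j|.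

Definition feasX (R : realType) (n : nat) (C : 'M[R]_n)
  (u v : 'I_n -> R) (t : 'M[R]_n) : Prop :=
  forall i j, 0 <= t i j /\ u i + v j - C i j <= t i j.

Definition h_eta (R : realType) (n : nat) (tau eta : R) (a b : 'I_n -> R)
  (u v : 'I_n -> R) (t : 'M[R]_n) : R :=
  (4 * eta)^-1 * (\sum_(i < n) \sum_(j < n) t i j ^+ 2)
  + tau * (\sum_(i < n) expR (- u i / tau) * a i)
  + tau * (\sum_(j < n) expR (- v j / tau) * b j).

Definition is_optimal (R : realType) (n : nat) (C : 'M[R]_n) (tau eta : R)
  (a b : 'I_n -> R) (u v : 'I_n -> R) (t : 'M[R]_n) : Prop :=
  feasX C u v t /\
  forall u' v' t', feasX C u' v' t' ->
    h_eta tau eta a b u v t <= h_eta tau eta a b u' v' t'.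

(* Main.v *)
Require Import Defs.
From HB Require Import structures.
From mathcomp Require Import all_boot all_order all_algebra.
From mathcomp Require Import all_classical all_reals all_analysis.
From mathcomp Require Import ring lra.
Import Order.TTheory GRing.Theory Num.Theory.
Local Open Scope ring_scope.
Set Implicit Arguments. Unset Strict Implicit.



Lemma bigmax_ge (R : realType) (I : finType) (F : I -> R) x :
  F x <= \big[Num.max/0]_(k : I) F k.
Proof.
rewrite -big_enum; elim: (enum I) (mem_enum I x) => [|y s IH] //.
rewrite inE big_cons => /orP [/eqP ->|/IH h]; first by rewrite le_max lexx.
by rewrite le_max h orbT.
Qed.

Lemma bigmin_le (R : realType) (I : finType) (F : I -> R) x0 x :
  \big[Num.min/x0]_(k : I) F k <= F x.
Proof.
rewrite -big_enum; elim: (enum I) (mem_enum I x) => [|y s IH] //.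
rewrite inE big_cons => /orP [/eqP ->|/IH h]; first by rewrite ge_min lexx.
by rewrite ge_min h orbT.
Qed.

Lemma bigmin_gt0 (R : realType) (I : finType) (F : I -> R) x0 :
  0 < x0 -> (forall i, 0 < F i) -> 0 < \big[Num.min/x0]_(k : I) F k.
Proof.
move=> h0 hF; rewrite -big_enum; elim: (enum I) => [|y s IH]; first by rewrite big_nil.
by rewrite big_cons lt_min hF IH.
Qed.

Lemma Cle (R : realType) n (C : 'M[R]_n) i j : C i j <= mx_infnorm C.
Proof.
rewrite /mx_infnorm.
apply: (le_trans (real_ler_norm (num_real (C i j)))).
apply: le_trans (@bigmax_ge _ _ (fun i => \big[Num.max/0]_(j < n) `|C i j|) i).
exact: bigmax_ge.
Qed.

Lemma sum_upd (R : realType) n (F G : 'I_n -> R) i :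
  (forall k, k != i -> F k = G k) ->
  \sum_k F k = \sum_k G k - G i + F i.
Proof.
move=> h; rewrite (bigD1 i) //= [in RHS](bigD1 i) //=.
rewrite (eq_bigr G); last by move=> k /h.
by rewrite [in RHS]addrC addrK addrC.
Qed.

Lemma sum_gt0 (R : realType) n (F : 'I_n -> R) (hn : (1 <= n)%N) :
  (forall i, 0 < F i) -> 0 < \sum_i F i.
Proof.
move=> h; rewrite (bigD1 (Ordinal hn)) //=.
have h1 := h (Ordinal hn).
have h2 : 0 <= \sum_(i < n | i != Ordinal hn) F i by apply: sumr_ge0 => k _; apply/ltW.
lra.
Qed.

Lemma term_le_sum (R : realType) n (F : 'I_n -> R) i :
  (forall k, 0 <= F k) -> F i <= \sum_k F k.
Proof.
move=> h; rewrite (bigD1 i) //=; rewrite lerDl; exact: sumr_ge0.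
Qed.



Lemma expR_lnpos (R : realType) (k : R) : 0 < k -> expR (ln k) = k.
Proof. by move=> hk; rewrite lnK // posrE. Qed.

Lemma shift_eq (R : realType) (n : nat) (hn : (1 <= n)%N)
  (C : 'M[R]_n) (a b : 'I_n -> R) (ha : forall i, 0 < a i) (hb : forall i, 0 < b i)
  (tau eta : R) (htau : 0 < tau)
  (u v : 'I_n -> R) (t : 'M[R]_n)
  (hopt : is_optimal C tau eta a b u v t) :
  \sum_(i < n) expR (- u i / tau) * a i = \sum_(j < n) expR (- v j / tau) * b j.
Proof.
set SA := \sum_(i < n) _; set SB := \sum_(j < n) _.
have key : forall k, 0 < k -> SA + SB <= k * SA + k^-1 * SB.
  move=> k hk.
  pose c := - tau * ln k.
  have feas : feasX C (fun i => u i + c) (fun j => v j - c) t.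
    move=> i j; have [h1 h2] := hopt.1 i j; split => //.
    by have -> : u i + c + (v j - c) - C i j = u i + v j - C i j by ring.
  have := hopt.2 _ _ _ feas; rewrite /h_eta.
  have eA : \sum_(i < n) expR (- (u i + c) / tau) * a i = k * SA.
    rewrite /SA mulr_sumr; apply: eq_bigr => i _.
    have -> : - (u i + c) / tau = - u i / tau + ln k.
      rewrite /c; field; lra.
    by rewrite expRD expR_lnpos //; ring.
  have eB : \sum_(j < n) expR (- (v j - c) / tau) * b j = k^-1 * SB.
    rewrite /SB mulr_sumr; apply: eq_bigr => i _.
    have -> : - (v i - c) / tau = - v i / tau + - ln k.
      rewrite /c; field; lra.
    by rewrite expRD expRN expR_lnpos //; ring.
  rewrite eA eB => h.
  have h1 : tau * (SA + SB) <= tau * (k * SA + k^-1 * SB) by move: h; rewrite -/SA -/SB; lra.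
  by rewrite ler_pM2l in h1.
have hSA : 0 < SA by apply: sum_gt0 => // i; apply: mulr_gt0; [exact: expR_gt0|exact: ha].
have hSB : 0 < SB by apply: sum_gt0 => // i; apply: mulr_gt0; [exact: expR_gt0|exact: hb].
pose p := Num.sqrt SA; pose q := Num.sqrt SB.
have hp : 0 < p by rewrite sqrtr_gt0.
have hq : 0 < q by rewrite sqrtr_gt0.
have ep : SA = p ^+ 2 by rewrite sqr_sqrtr // ltW.
have eq' : SB = q ^+ 2 by rewrite sqr_sqrtr // ltW.
have hqp : 0 < q / p by apply: divr_gt0.
have := key _ hqp.
have -> : q / p * SA + (q / p)^-1 * SB = 2 * p * q.
  rewrite ep eq' invf_div; field; apply/andP; split; apply/lt0r_neq0 => //.
rewrite ep eq' => h.
have h2 : (p - q) ^+ 2 <= 0 by nra.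
have : (p - q) ^+ 2 == 0 by rewrite eq_le h2 sqr_ge0.
by rewrite sqrf_eq0 subr_eq0 => /eqP ->.
Qed.



Lemma SA_bound (R : realType) (n : nat) (hn : (1 <= n)%N)
  (C : 'M[R]_n) (hC : forall i j, 0 <= C i j)
  (a b : 'I_n -> R) (ha : forall i, 0 < a i) (hb : forall i, 0 < b i)
  (tau eta : R) (htau : 0 < tau) (heta : 0 < eta)
  (u v : 'I_n -> R) (t : 'M[R]_n)
  (hopt : is_optimal C tau eta a b u v t) :
  \sum_(i < n) expR (- u i / tau) * a i <= (\sum_(i < n) a i + \sum_(i < n) b i) / 2.
Proof.
have e := shift_eq hn ha hb htau hopt.
have feas : feasX C (fun _ => 0) (fun _ => 0) 0.
  move=> i j; rewrite mxE; split => //; rewrite addr0 sub0r oppr_le0; exact: hC.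
have := hopt.2 _ _ _ feas; rewrite /h_eta.
have -> : \sum_(i < n) \sum_(j < n) (0 : 'M[R]_n) i j ^+ 2 = 0.
  by apply: big1 => i _; apply: big1 => j _; rewrite mxE expr0n.
have -> : \sum_(i < n) expR (- (0:R) / tau) * a i = \sum_(i < n) a i.
  by apply: eq_bigr => i _; rewrite oppr0 mul0r expR0 mul1r.
have -> : \sum_(i < n) expR (- (0:R) / tau) * b i = \sum_(i < n) b i.
  by apply: eq_bigr => i _; rewrite oppr0 mul0r expR0 mul1r.
have hQ : 0 <= (4 * eta)^-1 * \sum_(i < n) \sum_(j < n) t i j ^+ 2.
  apply: mulr_ge0; first by rewrite invr_ge0; lra.
  by apply: sumr_ge0 => i _; apply: sumr_ge0 => j _; exact: sqr_ge0.
rewrite -e => h.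
have h1 : tau * (2 * \sum_(i < n) expR (- u i / tau) * a i) <=
          tau * (\sum_(i < n) a i + \sum_(i < n) b i) by lra.
rewrite ler_pM2l // in h1; lra.
Qed.

Lemma u_lower (R : realType) (n : nat) (hn : (1 <= n)%N)
  (C : 'M[R]_n) (hC : forall i j, 0 <= C i j)
  (a b : 'I_n -> R) (ha : forall i, 0 < a i) (hb : forall i, 0 < b i)
  (tau eta : R) (htau : 0 < tau) (heta : 0 < eta)
  (u v : 'I_n -> R) (t : 'M[R]_n)
  (hopt : is_optimal C tau eta a b u v t) i :
  expR (- u i / tau) * a i <= (\sum_(i < n) a i + \sum_(i < n) b i) / 2.
Proof.
apply: le_trans (SA_bound hn hC ha hb htau heta hopt).
apply: (@term_le_sum _ _ (fun i => expR (- u i / tau) * a i)) => k.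
by apply: mulr_ge0; [exact/ltW/expR_gt0|exact/ltW].
Qed.



Lemma eqle (R : realType) (x y : R) : x = y -> x <= y.
Proof. by move->. Qed.

Lemma expR_quad (R : realType) (x : R) : 0 <= x -> x <= 1/2 -> expR x <= 1 + x + 2 * x ^+ 2.
Proof.
move=> h0 h1.
have hE := expR_ge1Dx (- x).
have hpos : 0 < 1 - x by lra.
have e : expR x = (expR (- x))^-1 by rewrite expRN invrK.
rewrite e.
apply: (le_trans (y := (1 - x)^-1)).
  rewrite lef_pV2 ?posrE ?expR_gt0 //; lra.
rewrite -[X in X <= _]div1r ler_pdivrMr //.
have h2 : 0 <= 1 - 2 * x by lra.
have := mulr_ge0 (sqr_ge0 x) h2; nra.
Qed.

Lemma eps_lemma (R : realType) (tau T Z M : R) : 0 < tau -> 0 <= M ->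
  (forall d, 0 < d -> d <= tau / 2 -> T <= Z + d * M) -> T <= Z.
Proof.
move=> htau hM h; apply/ler_addgt0Pr => e he.
pose d := Num.min (tau / 2) (e / (M + 1)).
have hd : 0 < d by rewrite lt_min; apply/andP; split; [lra| apply: divr_gt0; lra].
have hd1 : d <= tau / 2 by rewrite ge_min lexx.
have hd2 : d <= e / (M + 1) by rewrite ge_min lexx orbT.
have hd3 : d * (M + 1) <= e by rewrite -ler_pdivlMr //; lra.
have := h d hd hd1; nra.
Qed.

Lemma kkt_row (R : realType) (n : nat)
  (C : 'M[R]_n) (a b : 'I_n -> R) (ha : forall i, 0 < a i)
  (tau eta : R) (htau : 0 < tau) (heta : 0 < eta)
  (u v : 'I_n -> R) (t : 'M[R]_n)
  (hopt : is_optimal C tau eta a b u v t) i :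
  \sum_(j < n) t i j <= 2 * eta * (expR (- u i / tau) * a i).
Proof.
set K := expR (- u i / tau) * a i; set T := \sum_(j < n) t i j.
have hK : 0 <= K by apply: mulr_ge0; [exact/ltW/expR_gt0|exact/ltW].
pose w := (4 * eta)^-1.
have hw : 0 < w by rewrite invr_gt0; lra.
have hw4 : w * (4 * eta) = 1 by rewrite mulVf //; lra.
apply: (@eps_lemma _ tau _ _ (n%:R / 2 + 4 * eta * K / tau)) => //.
  apply: addr_ge0; first by apply: divr_ge0; [exact: ler0n| lra].
  by apply: divr_ge0; [apply: mulr_ge0 => //; lra| lra].
move=> d hd hd2.
pose u' := fun k => if k == i then u k - d else u k.
pose t' : 'M[R]_n := \matrix_(k, j) if k == i then Num.max (0:R) (t k j - (d:R)) else t k j.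
have feas : feasX C u' v t'.
  move=> k j; have [h1 h2] := hopt.1 k j; rewrite /u' /t' mxE.
  case: eqP => [ek|_]; last by [].
  subst k; split; first by rewrite le_max lexx.
  by rewrite le_max; apply/orP; right; lra.
have h := hopt.2 _ _ _ feas; move: h; rewrite /h_eta.
rewrite (@sum_upd _ _ (fun k => \sum_(j < n) t' k j ^+ 2) (fun k => \sum_(j < n) t k j ^+ 2) i); last first.
  move=> k hk; apply: eq_bigr => j _; by rewrite /t' mxE (negbTE hk).
rewrite (@sum_upd _ _ (fun k => expR (- u' k / tau) * a k) (fun k => expR (- u k / tau) * a k) i); last first.
  by move=> k hk; rewrite /u' (negbTE hk).
rewrite /= /u' eqxx.
set Q := \sum_(i0 < n) \sum_(j < n) t i0 j ^+ 2.
set SA := \sum_(i0 < n) expR (- u i0 / tau) * a i0.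
set SB := \sum_(j < n) expR (- v j / tau) * b j.
have er : \sum_(j < n) t' i j ^+ 2 <= \sum_(j < n) t i j ^+ 2 - 2 * d * T + n%:R * d ^+ 2.
  apply: (le_trans (y := \sum_(j < n) (t i j ^+ 2 - 2 * d * t i j + d ^+ 2))).
    apply: ler_sum => j _; rewrite /t' mxE eqxx.
    have [hx|hx] := lerP 0 (t i j - d).
      apply: eqle; ring.
    rewrite expr0n /=; nra.
  rewrite big_split /= big_split /= sumrN sumr_const card_ord /T mulr_sumr -[d ^+ 2 *+ n]mulr_natl.
  by [].
have eE : expR (- (u i - d) / tau) * a i = K * expR (d / tau).
  have -> : - (u i - d) / tau = - u i / tau + d / tau by field; lra.
  by rewrite expRD /K; ring.
rewrite eE => h.
have hx0 : 0 <= d / tau by apply: divr_ge0; lra.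
have hx1 : d / tau <= 1 / 2 by rewrite ler_pdivrMr //; lra.
have hE := expR_quad hx0 hx1.
have hE2 : tau * K * (expR (d / tau) - 1) <= tau * K * (d / tau + 2 * (d / tau) ^+ 2).
  apply: ler_wpM2l; first by apply: mulr_ge0 => //; lra.
  lra.
have eq2 : tau * K * (d / tau + 2 * (d / tau) ^+ 2) = K * d + 2 * K * d ^+ 2 / tau.
  by field; lra.
have hmain : 2 * w * d * T <= w * (n%:R * d ^+ 2) + K * d + 2 * K * d ^+ 2 / tau.
  have hw2 : w * (\sum_(j < n) t' i j ^+ 2) <= w * (\sum_(j < n) t i j ^+ 2 - 2 * d * T + n%:R * d ^+ 2).
    by apply: ler_wpM2l => //; apply: ltW.
  move: h; rewrite -/K /w in hw2 * => h; lra.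
have h2wd : 0 < 2 * w * d by apply: mulr_gt0 => //; apply: mulr_gt0 => //; lra.
rewrite -(ler_pM2l h2wd).
apply: (le_trans hmain).
apply: eqle.
rewrite /w; field; lra.
Qed.



Lemma h_eta_tr (R : realType) n (tau eta : R) (a b u v : 'I_n -> R) (t : 'M[R]_n) :
  h_eta tau eta b a v u t^T = h_eta tau eta a b u v t.
Proof.
rewrite /h_eta.
have -> : \sum_(i < n) \sum_(j < n) t^T i j ^+ 2 = \sum_(i < n) \sum_(j < n) t i j ^+ 2.
  rewrite exchange_big; apply: eq_bigr => i _; apply: eq_bigr => j _; by rewrite mxE.
lra.
Qed.

Lemma opt_tr (R : realType) n (C : 'M[R]_n) (tau eta : R) (a b u v : 'I_n -> R) (t : 'M[R]_n) :
  is_optimal C tau eta a b u v t -> is_optimal C^T tau eta b a v u t^T.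
Proof.
move=> [hf ho]; split.
  move=> i j; rewrite !mxE; have [h1 h2] := hf j i; split => //; lra.
move=> u' v' t' hf'.
rewrite h_eta_tr -[t']trmxK h_eta_tr; apply: ho.
move=> i j; rewrite mxE; have [h1 h2] := hf' j i; move: h2; rewrite mxE => h2; split => //; lra.
Qed.

Lemma lower_from (R : realType) (tau x S y : R) : 0 < tau -> 0 < x -> 0 < S ->
  expR (- y / tau) * x <= S / 2 -> tau * ln (2 * x / S) <= y.
Proof.
move=> ht hx hS h.
set E := expR (y / tau).
have hE : 0 < E by apply: expR_gt0.
have eE : expR (- y / tau) = E^-1 by rewrite -expRN mulNr.
rewrite eE in h.
have h1 : E * (E^-1 * x) <= E * (S / 2) by apply: ler_wpM2l => //; apply: ltW.
have ex : E * (E^-1 * x) = x by field; apply: lt0r_neq0.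
rewrite ex in h1.
have h2 : 2 * x / S <= E by rewrite ler_pdivrMr //; lra.
have hp : 0 < 2 * x / S by apply: divr_gt0 => //; lra.
have h3 : ln (2 * x / S) <= y / tau.
  by rewrite -ler_expR expR_lnpos.
have h4 : tau * ln (2 * x / S) <= tau * (y / tau) by apply: ler_wpM2l => //; apply: ltW.
have e5 : tau * (y / tau) = y by field; apply: lt0r_neq0.
by rewrite e5 in h4.
Qed.

Unset Implicit Arguments. Set Strict Implicit.


Lemma upper_from (R : realType) (tau eta ab cn y w bj mn : R) :
  0 < tau -> 0 < ab -> 0 < bj -> 0 < mn -> mn <= bj ->
  tau * ln (2 * bj / ab) <= w ->
  y + w - cn <= eta * ab ->
  y <= cn + eta * ab + tau * ln (ab / 2) - tau * ln mn.
Proof.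
move=> ht hab hb hm hmb hw hy.
have e : ln (2 * bj / ab) = ln bj - ln (ab / 2).
  have -> : 2 * bj / ab = bj * (ab / 2)^-1 by field; apply: lt0r_neq0.
  rewrite lnM ?posrE ?invr_gt0 //; last by apply: divr_gt0 => //; lra.
  by rewrite lnV // posrE; apply: divr_gt0 => //; lra.
have hl : ln mn <= ln bj by rewrite ler_ln ?posrE.
rewrite e in hw.
have : tau * ln mn <= tau * ln bj by apply: ler_wpM2l => //; apply: ltW.
lra.
Qed.

Theorem corollary1 (R : realType) (n : nat) (hn : (1 <= n)%N)
  (C : 'M[R]_n) (hC : forall i j, 0 <= C i j)
  (a b : 'I_n -> R) (ha : forall i, 0 < a i) (hb : forall i, 0 < b i)
  (tau eta : R) (htau : 0 < tau) (heta : 0 < eta)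
  (u v : 'I_n -> R) (t : 'M[R]_n)
  (hopt : is_optimal C tau eta a b u v t) :
  let alpha := \sum_(i < n) a i in
  let beta := \sum_(i < n) b i in
  let amin := \big[Num.min/a (Ordinal hn)]_(i < n) a i in
  let bmin := \big[Num.min/b (Ordinal hn)]_(i < n) b i in
  let D := mx_infnorm C + eta * (alpha + beta) + tau * ln ((alpha + beta) / 2)
           - tau * Num.min (ln amin) (ln bmin) in
  forall i j : 'I_n,
    tau * ln (2 * a i / (alpha + beta)) <= u i <= D /\
    tau * ln (2 * b j / (alpha + beta)) <= v j <= D.
Proof.
move=> alpha beta amin bmin D i j.
have hal : 0 < alpha by apply: sum_gt0.
have hbe : 0 < beta by apply: sum_gt0.
have hab : 0 < alpha + beta by lra.
have hoptT := opt_tr hopt.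
have hCT : forall i j, 0 <= C^T i j by move=> i' j'; rewrite mxE.
have hamin : 0 < amin by apply: bigmin_gt0.
have hbmin : 0 < bmin by apply: bigmin_gt0.
have Lu : forall i, tau * ln (2 * a i / (alpha + beta)) <= u i.
  move=> k; apply: lower_from => //; exact: (u_lower hn hC ha hb htau heta hopt).
have Lv : forall j, tau * ln (2 * b j / (alpha + beta)) <= v j.
  move=> k; apply: lower_from => //; rewrite /alpha /beta addrC.
  exact: (u_lower hn hCT hb ha htau heta hoptT).
have Tu : t i j <= eta * (alpha + beta).
  apply: (le_trans (y := \sum_(k < n) t i k)).
    by apply: (@term_le_sum _ _ (fun k => t i k)) => k; have [] := hopt.1 i k.
  apply: (le_trans (kkt_row ha htau heta hopt i)).
  have := u_lower hn hC ha hb htau heta hopt i; rewrite -/alpha -/beta.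
  have := heta; nra.
have Tv : t i j <= eta * (alpha + beta).
  apply: (le_trans (y := \sum_(k < n) t^T j k)).
    have -> : t i j = t^T j i by rewrite mxE.
    by apply: (@term_le_sum _ _ (fun k => t^T j k)) => k; have [] := hoptT.1 j k.
  apply: (le_trans (kkt_row hb htau heta hoptT j)).
  have := u_lower hn hCT hb ha htau heta hoptT j; rewrite -/alpha -/beta.
  have := heta; nra.
have [h1 h2] := hopt.1 i j.
have hCij := Cle C i j.
split; apply/andP; split.
- exact: Lu.
- rewrite /D.
  have hmin : tau * Num.min (ln amin) (ln bmin) <= tau * ln bmin.
    by apply: ler_wpM2l; [apply: ltW| rewrite ge_min lexx orbT].
  have := @upper_from R tau eta (alpha + beta) (C i j) (u i) (v j) (b j) bmin htau hab (hb j)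
    hbmin (bigmin_le _ _ _) (Lv j) (le_trans h2 Tu).
  lra.
- exact: Lv.
- rewrite /D.
  have hmin : tau * Num.min (ln amin) (ln bmin) <= tau * ln amin.
    by apply: ler_wpM2l; [apply: ltW| rewrite ge_min lexx].
  have h2' : v j + u i - C i j <= eta * (alpha + beta) by lra.
  have := @upper_from R tau eta (alpha + beta) (C i j) (v j) (u i) (a i) amin htau hab (ha i)
    hamin (bigmin_le _ _ _) (Lu i) h2'.
  lra.
Qed.
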